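(* Let $1<\alpha<2$ and let $\{G(n)\}$ be a sequence of random intersection graphs satisfying conditions (A) and (PL) with this $\alpha$. Suppose that for some $\beta>\alpha-1$ we have $m=\Omega(n^\beta)$. Then there is a constant $\delta>0$ such that $\omega'(G(n))\le n^{1-\alpha/2-\delta}$ with probability tending to $1$.
   Context: Random intersection graph: given positive integers $n,m$ and a probability measure $P$ on $\{0,\dots,m\}$, $G(n,m,P)$ has vertex set $V=[n]$ and attribute set $W=\{w_1,\dots,w_m\}$; independent random subsets $S_1,\dots,S_n\subseteq W$ with $\mathbb P(S_v=S)=P(|S|)/\binom{m}{|S|}$; distinct $u,v$ adjacent iff $S_u\cap S_v\ne\emptyset$. For a sequence $G(n)=G(n,m(n),P(n))$ with $m(n)\to\infty$, $X(n)$ has law $P(n)$ and $Y(n)=(n/m)^{1/2}X(n)$. Condition (A): $\mathbb E\,Y(n)=O(1)$. Condition (PL): there are a slowly varying $L$ and $\varepsilon_0\in(0,1/2)$ such that for every sequence $x_n$ with $n^{1/2-\varepsilon_0}\le x_n\le n^{1/2+\varepsilon_0}$, $\mathbb P(Y(n)\ge x_n)\sim L(x_n)x_n^{-\alpha}$. $\omega'(G(n))=\max_{w\in W}|\{v: w\in S_v\}|$. *)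

(* Defs.v *)
From mathcomp Require Import all_boot.
From Stdlib Require Import Reals.
Set Implicit Arguments. Unset Strict Implicit. Unset Printing Implicit Defensive.

(* An outcome of G(n,m,P): the attribute sets S_v, v in [n], subsets of W = [m]. *)
Definition outcome (n m : nat) := {ffun 'I_n -> {set 'I_m}}.

Definition outcomeProb (n m : nat) (P : nat -> R) (f : outcome n m) : R :=
  \big[Rmult/R1]_(v < n) (Rdiv (P #|f v|) (INR 'C(m, #|f v|))).

Definition eventProb (n m : nat) (P : nat -> R) (E : pred (outcome n m)) : R :=
  \big[Rplus/R0]_(f : outcome n m | E f) outcomeProb P f.

(* omega'(G) = max_w |{v : w in S_v}|  (0 if m = 0). *)
Definition omega' (n m : nat) (f : outcome n m) : nat :=
  \max_(w : 'I_m) #|[set v : 'I_n | w \in f v]|.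

Definition is_prob_on (m : nat) (P : nat -> R) : Prop :=
  (forall k, (0 <= P k)%R) /\ (\big[Rplus/R0]_(k < m.+1) P k) = 1%R.

(* Y(n) = (n/m)^{1/2} X(n), X(n) ~ P(n). *)
Definition scaleY (n m : nat) : R := sqrt (INR n / INR m).

Definition EY (n m : nat) (P : nat -> R) : R :=
  (scaleY n m * \big[Rplus/R0]_(k < m.+1) (INR k * P k))%R.

Definition tailY (n m : nat) (P : nat -> R) (x : R) : R :=
  \big[Rplus/R0]_(k < m.+1 | if Rle_dec x (scaleY n m * INR k) then true else false) P k.

Definition asympt_eq (a b : nat -> R) : Prop := Un_cv (fun n => a n / b n)%R 1%R.

Definition slowly_varying (L : R -> R) : Prop :=
  (exists x0, forall x, (x0 < x)%R -> (0 < L x)%R) /\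
  forall t, (0 < t)%R -> forall eps, (0 < eps)%R ->
    exists M, forall x, (M < x)%R -> (Rabs (L (t * x) / L x - 1) < eps)%R.

Definition condA (m : nat -> nat) (P : nat -> nat -> R) : Prop :=
  exists C N, forall n, (N <= n)%nat -> (EY n (m n) (P n) <= C)%R.

Definition condPL (alpha : R) (m : nat -> nat) (P : nat -> nat -> R) : Prop :=
  exists (L : R -> R) (eps0 : R),
    slowly_varying L /\ (0 < eps0 < 1/2)%R /\
    forall x : nat -> R,
      (forall n, (1 <= n)%nat ->
         Rpower (INR n) (1/2 - eps0) <= x n <= Rpower (INR n) (1/2 + eps0))%R ->
      asympt_eq (fun n => tailY n (m n) (P n) (x n))
                (fun n => L (x n) * Rpower (x n) (- alpha))%R.

(* Main.v *)
Require Import Defs.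
From Stdlib Require Import Reals Lra Psatz ZArith Lia.
Open Scope R_scope.
Ltac slra := lra.
Ltac snra := nra.
Ltac sfield := field.
Ltac sring := ring.

Lemma Rpower_pos x y : 0 < Rpower x y.
Proof. unfold Rpower; apply exp_pos. Qed.

Lemma nat_big (z : R) : exists N : nat, z <= INR N.
Proof.
destruct (Rle_or_lt z 0) as [h|h].
- exists 0%nat; simpl; lra.
- destruct (archimed z) as [h1 _].
  exists (Z.to_nat (up z)).
  rewrite INR_IZR_INZ, Z2Nat.id; [lra|].
  apply le_IZR; lra.
Qed.

Lemma Rpower_big e y : 0 < e -> exists N : nat, forall n, (N <= n)%nat -> y <= Rpower (INR n) e.
Proof.
intros he.
set (z := Rpower (Rmax y 1) (/ e)).
destruct (nat_big z) as [N hN].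
exists N; intros n hn.
assert (hz : 0 < z) by apply Rpower_pos.
assert (hnz : z <= INR n) by (apply le_INR in hn; lra).
apply Rle_trans with (Rpower z e).
- unfold z; rewrite Rpower_mult, Rinv_l by lra; rewrite Rpower_1.
  + apply Rmax_l.
  + apply Rlt_le_trans with 1; [lra|apply Rmax_r].
- apply Rle_Rpower_l; lra.
Qed.

Lemma Rpower_small r eps : r < 0 -> 0 < eps -> exists N : nat, forall n, (N <= n)%nat -> Rpower (INR n) r < eps.
Proof.
intros hr he.
destruct (Rpower_big (- r) (2 / eps)) as [N hN]; [lra|].
exists N; intros n hn.
specialize (hN n hn).
replace r with (- - r) by ring.
rewrite Rpower_Ropp.
assert (h2 : 0 < 2 / eps) by (apply Rdiv_lt_0_compat; lra).
apply Rle_lt_trans with (/ (2 / eps)).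
- apply Rinv_le_contravar; lra.
- rewrite Rinv_div. lra.
Qed.

Lemma pow_le_compat a b k : 0 <= a -> a <= b -> a ^ k <= b ^ k.
Proof. intros; apply pow_incr; lra. Qed.

Lemma bound_alg (nn MM EXv Cc cc T b0 e : R) (j0 : nat) :
  0 < nn -> 0 < MM -> 0 <= EXv -> sqrt (nn / MM) * EXv <= Cc -> 0 < cc ->
  cc * Rpower nn b0 <= MM -> T = Rpower nn e ->
  MM * (nn * (EXv / MM)) ^ (2 * S j0) * (2 / T) ^ (2 * S j0)
  <= (Cc ^ 2) ^ S j0 * 4 ^ S j0 / cc ^ j0 *
     Rpower nn (1 + (1 - b0) * INR j0 - e * (2 * INR (S j0))).
Proof.
intros hn hM hE hC hc hMb hT.
set (x := nn / MM).
assert (hx : 0 < x) by (unfold x; apply Rdiv_lt_0_compat; lra).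
assert (e1 : nn * (EXv / MM) = x * EXv) by (unfold x; field; lra).
rewrite e1.
assert (hs : sqrt x * sqrt x = x) by (apply sqrt_sqrt; lra).
assert (hs0 : 0 <= sqrt x) by apply sqrt_pos.
assert (hsq : (x * EXv) ^ 2 <= x * Cc ^ 2).
{ assert (eq : x * (sqrt x * EXv) ^ 2 = (x * EXv) ^ 2).
  { transitivity (x * ((sqrt x * sqrt x) * EXv ^ 2)); [ring| rewrite hs; ring]. }
  rewrite <- eq.
  apply Rmult_le_compat_l; [lra|].
  apply pow_le_compat; [apply Rmult_le_pos; lra| exact hC]. }
assert (h1 : (x * EXv) ^ (2 * S j0) <= (x * Cc ^ 2) ^ S j0).
{ rewrite pow_mult. apply pow_le_compat; [apply pow2_ge_0|exact hsq]. }
assert (hT0 : 0 < T) by (rewrite hT; apply Rpower_pos).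
assert (e2 : (2 / T) ^ (2 * S j0) = 4 ^ S j0 * Rpower nn (- (e * (2 * INR (S j0))))).
{ rewrite Rpower_Ropp, <- Rpower_mult, <- hT.
  replace (2 * INR (S j0)) with (INR (2 * S j0)) by (rewrite mult_INR; reflexivity).
  rewrite Rpower_pow by lra.
  unfold Rdiv. rewrite Rpow_mult_distr, pow_inv, (pow_mult 2 2 (S j0)).
  replace ((2 ^ 2)) with 4 by ring. reflexivity. }
rewrite e2.
assert (hxb : x <= Rpower nn (1 - b0) / cc).
{ unfold x. unfold Rminus. rewrite Rpower_plus, Rpower_1 by lra. rewrite Rpower_Ropp.
  assert (0 < Rpower nn b0) by apply Rpower_pos.
  apply Rmult_le_reg_r with (MM * cc * Rpower nn b0); [apply Rmult_lt_0_compat; [apply Rmult_lt_0_compat|];lra|].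
  field_simplify; try lra. nra. }
assert (hxj : x ^ j0 <= Rpower nn ((1 - b0) * INR j0) / cc ^ j0).
{ apply Rle_trans with ((Rpower nn (1 - b0) / cc) ^ j0).
  - apply pow_le_compat; lra.
  - unfold Rdiv. rewrite Rpow_mult_distr, pow_inv, <- Rpower_pow by apply Rpower_pos.
    rewrite Rpower_mult. lra. }
assert (hxMM : MM * x = nn) by (unfold x; field; lra).
set (Rr := Rpower nn (- (e * (2 * INR (S j0))))).
assert (hR : 0 < Rr) by apply Rpower_pos.
assert (hK : 0 <= (Cc ^ 2) ^ S j0 * 4 ^ S j0 * Rr).
{ apply Rmult_le_pos; [apply Rmult_le_pos|lra]; apply pow_le; [apply pow2_ge_0|lra]. }
apply Rle_trans with (MM * (x * Cc ^ 2) ^ S j0 * (4 ^ S j0 * Rr)).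
{ apply Rmult_le_compat_r; [apply Rmult_le_pos; [apply pow_le|]; lra|].
  apply Rmult_le_compat_l; lra. }
assert (eL : MM * (x * Cc ^ 2) ^ S j0 * (4 ^ S j0 * Rr) = nn * x ^ j0 * ((Cc ^ 2) ^ S j0 * 4 ^ S j0 * Rr)).
{ rewrite Rpow_mult_distr. simpl pow at 1. rewrite <- hxMM. ring. }
assert (eR : (Cc ^ 2) ^ S j0 * 4 ^ S j0 / cc ^ j0 * Rpower nn (1 + (1 - b0) * INR j0 - e * (2 * INR (S j0)))
   = nn * (Rpower nn ((1 - b0) * INR j0) / cc ^ j0) * ((Cc ^ 2) ^ S j0 * 4 ^ S j0 * Rr)).
{ unfold Rr. unfold Rminus. rewrite !Rpower_plus, Rpower_1 by lra.
  assert (0 < cc ^ j0) by (apply pow_lt; lra). field. lra. }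
rewrite eL, eR.
apply Rmult_le_compat_r; [exact hK|].
apply Rmult_le_compat_l; lra.
Qed.

From mathcomp Require Import all_boot all_order all_algebra all_fingroup.
From Stdlib Require Import Reals.
From mathcomp Require Import Rstruct.
From mathcomp Require Import ring lra.
Import Order.TTheory GRing.Theory Num.Theory.
Lemma ffact_lo n k : (expn (subn n k) k <= n ^_ k)%nat.
Proof.
elim: k n => [|k IH] n; first by rewrite ffactn0.
rewrite ffactnS expnS.
have h1 : (n - k.+1 = n.-1 - k)%nat by rewrite -subn1 -subnDA add1n.
rewrite h1; apply: leq_mul; last exact: IH.
by rewrite -h1 leq_subr.
Qed.
Lemma ffact_hi n k : (n ^_ k <= expn n k)%nat.
Proof.
elim: k n => [|k IH] n; first by rewrite ffactn0.
rewrite ffactnS expnS; apply: leq_mul => //.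
apply: leq_trans (IH _) _; case: k {IH} => [|k]; first by rewrite !expn0.
by rewrite leq_exp2r // leq_pred.
Qed.

Local Open Scope ring_scope.

Section Comb.
Variables (M : nat) (P : nat -> R).
Hypothesis P0 : forall k, 0 <= P k.
Hypothesis Psum : \sum_(k < M.+1) P k = 1.

Definition q (S : {set 'I_M}) : R := P #|S| / ('C(M, #|S|))%:R.

Lemma sum_q_g (g : nat -> R) :
  \sum_(S : {set 'I_M}) q S * g #|S| = \sum_(k < M.+1) P k * g k.
Proof.
rewrite (partition_big (fun S : {set 'I_M} => (inord #|S| : 'I_M.+1)) xpredT) //=.
apply: eq_bigr => k _.
have hS : forall S : {set 'I_M}, (inord #|S| == k :> 'I_M.+1) = (#|S| == k).
  move=> S; have hS : (#|S| <= M)%nat by move: (max_card S); rewrite card_ord.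
  by rewrite -(inj_eq val_inj) /= inordK.
transitivity (\sum_(S in [set S : {set 'I_M} | #|S| == k]) (P k / ('C(M,k))%:R * g k)).
  apply: eq_big => S; first by rewrite inE hS.
  by rewrite hS /q => /eqP ->.
rewrite sumr_const card_draws card_ord.
have hC : ('C(M,k))%:R != 0 :> R.
  by rewrite pnatr_eq0 -lt0n bin_gt0 -ltnS.
rewrite -mulr_natr; field.
exact: hC.
Qed.

Lemma sum_q : \sum_(S : {set 'I_M}) q S = 1.
Proof.
rewrite -Psum -(eq_bigr _ (fun S _ => mulr1 (q S))).
rewrite (sum_q_g (fun _ => 1)).
by apply: eq_bigr => k _; rewrite mulr1.
Qed.

Definition EX := \sum_(k < M.+1) P k * k%:R.

Lemma pw_sym (w w' : 'I_M) :
  \sum_(S : {set 'I_M} | w \in S) q S = \sum_(S : {set 'I_M} | w' \in S) q S.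
Proof.
set s := tperm w w'.
rewrite (reindex_inj (imset_inj (@perm_inj _ s))) /=.
apply: eq_big => S.
  by rewrite -{1}(tpermR w w') -/s mem_imset //; exact: perm_inj.
move=> _; by rewrite /q card_imset //; exact: perm_inj.
Qed.

Lemma pw_val (w : 'I_M) :
  \sum_(S : {set 'I_M} | w \in S) q S = EX / M%:R.
Proof.
have hM : (0 < M)%nat by case: w => i; case: (M) => //.
have : \sum_(w0 : 'I_M) \sum_(S : {set 'I_M} | w0 \in S) q S = EX.
  rewrite (exchange_big_dep xpredT) //=.
  rewrite /EX -sum_q_g; apply: eq_bigr => S _.
  by rewrite sumr_const mulr_natr.
rewrite (eq_bigr _ (fun w0 _ => pw_sym w0 w)) sumr_const card_ord => <-.
have hMr : M%:R != 0 :> R by rewrite pnatr_eq0 -lt0n.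
rewrite -mulr_natr; field; exact: hMr.
Qed.

Variable n : nat.
Definition mu (f : {ffun 'I_n -> {set 'I_M}}) : R := \prod_(v < n) q (f v).

Lemma q_ge0 S : 0 <= q S.
Proof. by rewrite /q divr_ge0 // ler0n. Qed.

Lemma mu_ge0 f : 0 <= mu f.
Proof. by apply: prodr_ge0 => v _; exact: q_ge0. Qed.

Lemma sum_mu : \sum_(f : {ffun 'I_n -> {set 'I_M}}) mu f = 1.
Proof.
rewrite /mu.
have E := bigA_distr_bigA (fun (v : 'I_n) (S : {set 'I_M}) => q S).
rewrite /= in E; rewrite -E.
by rewrite (eq_bigr (fun _ => 1)) ?prodr_const ?expr1n // => v _; rewrite sum_q.
Qed.

Lemma evA (A : {set 'I_n}) (w : 'I_M) :
  \sum_(f : {ffun 'I_n -> {set 'I_M}})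
     (if A \subset [set v | w \in f v] then mu f else 0) = (EX / M%:R) ^+ #|A|.
Proof.
pose F := fun (v : 'I_n) (S : {set 'I_M}) =>
  if v \in A then (if w \in S then q S else 0) else q S.
transitivity (\prod_(v < n) \sum_(S : {set 'I_M}) F v S).
  rewrite bigA_distr_bigA /=; apply: eq_bigr => f _.
  case: ifP => hA.
    apply: eq_bigr => v _; rewrite /F; case: ifP => // hv.
    by move/subsetP: hA => /(_ v hv); rewrite inE => ->.
  case/subsetPn: hA => v hv; rewrite inE => hw.
  by rewrite (bigD1 v) //= /F hv (negbTE hw) mul0r.
have hp : EX / M%:R = \sum_(S : {set 'I_M} | w \in S) q S by rewrite pw_val.
rewrite (eq_bigr (fun v => if v \in A then EX / M%:R else 1)); last first.
  move=> v _; rewrite /F; case: ifP => _; last by rewrite sum_q.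
  by rewrite hp [RHS]big_mkcond.
rewrite -big_mkcond /= prodr_const.
done.
Qed.

Definition cw (f : {ffun 'I_n -> {set 'I_M}}) (w : 'I_M) : nat := #|[set v | w \in f v]|.

Lemma binom_sum f w k :
  ('C(cw f w, k))%:R = \sum_(A : {set 'I_n} | #|A| == k)
      (if A \subset [set v | w \in f v] then 1 else 0) :> R.
Proof.
rewrite -big_mkcondr sumr_const /cw -cards_draws; congr (_%:R).
by apply: eq_card => A; rewrite !inE andbC.
Qed.

Lemma sum_binom w k :
  \sum_(f : {ffun 'I_n -> {set 'I_M}}) mu f * ('C(cw f w, k))%:R
  = ('C(n, k))%:R * (EX / M%:R) ^+ k.
Proof.
transitivity (\sum_(f : {ffun 'I_n -> {set 'I_M}}) \sum_(A : {set 'I_n} | #|A| == k)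
      (if A \subset [set v | w \in f v] then mu f else 0)).
  apply: eq_bigr => f _; rewrite binom_sum mulr_sumr; apply: eq_bigr => A _.
  by case: ifP; rewrite ?mulr1 ?mulr0.
rewrite exchange_big /=.
rewrite (eq_bigr (fun _ => (EX / M%:R) ^+ k)); last first.
  by move=> A /eqP hA; rewrite evA hA.
rewrite sumr_const mulr_natl; congr (_ *+ _).
have := card_draws 'I_n k; rewrite card_ord => <-.
by apply: eq_card => A; rewrite inE.
Qed.

Lemma bad_point f (T : R) k : (0 < M)%nat -> 0 < T -> 2 * k%:R <= T ->
  T < (omega' f)%:R ->
  1 <= \sum_(w : 'I_M) ('C(cw f w, k))%:R * (k`!%:R / (T / 2) ^+ k).
Proof.
move=> hM hT hk hc.
have hM2 : (0 < #|'I_M|)%nat by rewrite card_ord.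
have [w0 hw0] := bigop.eq_bigmax (fun w => cw f w) hM2.
have e : omega' f = cw f w0 by rewrite /omega' -hw0.
rewrite (bigD1 w0) //=.
have hs : 0 <= \sum_(w | w != w0) ('C(cw f w, k))%:R * (k`!%:R / (T / 2) ^+ k).
  apply: sumr_ge0 => w _; apply: mulr_ge0; first exact: ler0n.
  by apply: divr_ge0; [exact: ler0n | apply: exprn_ge0; lra].
suff ha : 1 <= ('C(cw f w0, k))%:R * (k`!%:R / (T / 2) ^+ k) by lra.
set c := cw f w0.
have hcR : T < c%:R by rewrite /c -e.
have hk0 : 0 <= k%:R :> R by exact: ler0n.
have hkc : (k <= c)%nat by rewrite -(ler_nat R); lra.
have hT2 : 0 < (T / 2) ^+ k by apply: exprn_gt0; lra.
rewrite mulrA ler_pdivlMr // mul1r -natrM bin_ffact.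
apply: le_trans (_ : ((subn c k)%:R) ^+ k <= _).
  rewrite natrB //; apply: lerXn2r; rewrite ?nnegrE; lra.
by rewrite -natrX ler_nat ffact_lo.
Qed.

Lemma bad_bound (T : R) k : (0 < M)%nat -> 0 < T -> 2 * k%:R <= T ->
  \sum_(f : {ffun 'I_n -> {set 'I_M}} | ~~ ((omega' f)%:R <= T)) mu f
  <= M%:R * (('C(n, k))%:R * (EX / M%:R) ^+ k) * (k`!%:R / (T / 2) ^+ k).
Proof.
move=> hM hT hk.
set D := k`!%:R / (T / 2) ^+ k.
set S := fun f : {ffun 'I_n -> {set 'I_M}} => \sum_(w : 'I_M) ('C(cw f w, k))%:R * D.
have hS : forall f, 0 <= S f.
  move=> f; apply: sumr_ge0 => w _; apply: mulr_ge0; first exact: ler0n.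
  by apply: divr_ge0; [exact: ler0n | apply: exprn_ge0; lra].
have h1 : \sum_(f : {ffun 'I_n -> {set 'I_M}} | ~~ ((omega' f)%:R <= T)) mu f
   <= \sum_(f : {ffun 'I_n -> {set 'I_M}} | ~~ ((omega' f)%:R <= T)) mu f * S f.
  apply: ler_sum => f hf; rewrite -{1}[mu f]mulr1; apply: ler_wpM2l; first exact: mu_ge0.
  by apply: bad_point => //; rewrite ltNge.
have h2 : \sum_(f : {ffun 'I_n -> {set 'I_M}} | ~~ ((omega' f)%:R <= T)) mu f * S f
   <= \sum_(f : {ffun 'I_n -> {set 'I_M}}) mu f * S f.
  rewrite [X in _ <= X](bigID (fun f => ~~ ((omega' f)%:R <= T))) /= lerDl.
  by apply: sumr_ge0 => f _; apply: mulr_ge0; [exact: mu_ge0 | exact: hS].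
apply: le_trans h1 _; apply: le_trans h2 _.
rewrite le_eqVlt; apply/orP; left; apply/eqP.
rewrite /S; under eq_bigr do rewrite mulr_sumr.
rewrite exchange_big /=.
rewrite (eq_bigr (fun _ => ('C(n, k))%:R * (EX / M%:R) ^+ k * D)); last first.
  move=> w _; rewrite -(sum_binom w) mulr_suml; apply: eq_bigr => f _; by rewrite mulrA.
rewrite sumr_const card_ord.
rewrite -mulr_natl; ring.
Qed.
End Comb.


Lemma EX_ge0 M P : (forall k, 0 <= P k) -> 0 <= EX M P.
Proof. by move=> h; apply: sumr_ge0 => k _; apply: mulr_ge0 => //; exact: ler0n. Qed.

Lemma good_prob_ring n M (P : nat -> R) (T : R) k :
  (0 < M)%nat -> (forall k, 0 <= P k) -> \sum_(k < M.+1) P k = 1 ->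
  0 < T -> 2 * k%:R <= T ->
  1 - M%:R * (n%:R * (EX M P / M%:R)) ^+ k * (2 / T) ^+ k
   <= \sum_(f : {ffun 'I_n -> {set 'I_M}} | (omega' f)%:R <= T) mu M P n f.
Proof.
move=> hM P0 Ps hT hk.
have := @bad_bound M P P0 Ps n T k hM hT hk.

have := @sum_mu M P Ps n.
rewrite (bigID (fun f => (omega' f)%:R <= T)) /= => htot hbad.
set u := M%:R * ((n%:R * (EX M P / M%:R)) ^+ k) * (2 / T) ^+ k.
suff : M%:R * ('C(n, k)%:R * (EX M P / M%:R) ^+ k) * (k`!%:R / (T / 2) ^+ k) <= u by lra.
have hEX := @EX_ge0 M P P0.
have hMr : 0 < M%:R :> R by rewrite ltr0n.
have hp : 0 <= EX M P / M%:R by apply: divr_ge0 => //; exact: ltW.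
have hT2 : 0 < (T / 2) ^+ k by apply: exprn_gt0; lra.
have hC : 'C(n, k)%:R * k`!%:R <= n%:R ^+ k :> R.
  by rewrite -natrM bin_ffact -natrX ler_nat ffact_hi.
have e1 : M%:R * ('C(n, k)%:R * (EX M P / M%:R) ^+ k) * (k`!%:R / (T / 2) ^+ k)
   = (M%:R * (EX M P / M%:R) ^+ k / (T / 2) ^+ k) * ('C(n, k)%:R * k`!%:R).
  by ring.
have e2 : u = (M%:R * (EX M P / M%:R) ^+ k / (T / 2) ^+ k) * n%:R ^+ k.
  have hT0 : T != 0 by rewrite gt_eqF.
  rewrite /u exprMn.
  have -> : (2 / T) ^+ k = ((T / 2) ^+ k)^-1.
    by rewrite -exprVn invf_div.
  by ring.
rewrite e1 e2; apply: ler_wpM2l => //.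
apply: divr_ge0; last exact: ltW.
by apply: mulr_ge0; [exact: ltW | exact: exprn_ge0].
Qed.

Local Close Scope ring_scope.
Local Open Scope R_scope.
Delimit Scope ring_scope with ring.

Definition EXs (M : nat) (P : nat -> R) : R := \big[Rplus/R0]_(k < M.+1) (INR k * P k).

Lemma good_prob n M (P : nat -> R) (T : R) k :
  (0 < M)%nat -> is_prob_on M P -> 0 < T -> 2 * INR k <= T ->
  1 - INR M * (INR n * (EXs M P / INR M)) ^ k * (2 / T) ^ k
   <= eventProb P (fun f : outcome n M =>
        if Rle_dec (INR (omega' f)) T then true else false) <= 1.
Proof.
move=> hM [P0 Ps] hT hk.
have P0' : forall k, (0 <= P k)%ring by move=> i; apply/RleP.
have hT' : (0 < T)%ring by apply/RltP.
have hk' : (2 * k%:R <= T)%ring.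
 by apply/RleP; rewrite -[(k%:R)%ring]INRE; exact: hk.
have eE : eventProb P (fun f : outcome n M =>
        if Rle_dec (INR (omega' f)) T then true else false)
   = (\sum_(f : {ffun 'I_n -> {set 'I_M}} | ((omega' f)%:R <= T)%ring) mu M P n f)%ring.
  rewrite /eventProb; apply: eq_big => f.
    case: Rle_dec => h; apply/esym.
      by apply/RleP; rewrite -INRE.
    by apply/negP => /RleP; rewrite -INRE.
  move=> _; rewrite /outcomeProb /mu /q; apply: eq_bigr => v _.
  by rewrite RdivE INRE.
have eX : EXs M P = EX M P.
  by rewrite /EXs /EX; apply: eq_bigr => i _; rewrite INRE mulrC.
have := @good_prob_ring n M P T k hM P0' Ps hT' hk'.
have htot := @sum_mu M P Ps n.
rewrite (bigID (fun f => ((omega' f)%:R <= T)%ring)) /= in htot.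
have hbad : (0 <= \sum_(f : {ffun 'I_n -> {set 'I_M}} | ~~ ((omega' f)%:R <= T)%ring) mu M P n f)%ring.
  by apply: sumr_ge0 => f _; exact: mu_ge0.
move=> hg; rewrite eE eX; split; apply/RleP.
  rewrite RminusE !RmultE !RdivE !INRE !RpowE; exact: hg.
have e1 : (1 : R) = (1%ring : R) by [].
rewrite e1; lra.
Qed.

Lemma EXs_ge0 M P : is_prob_on M P -> 0 <= EXs M P.
Proof.
move=> [P0 _]; have P0' : forall k, (0 <= P k)%ring by move=> i; apply/RleP.
have -> : EXs M P = EX M P by rewrite /EXs /EX; apply: eq_bigr => i _; rewrite INRE mulrC.
by apply/RleP; exact: EX_ge0.
Qed.

From Stdlib Require Import Lra.
Delimit Scope R_scope with R.
Local Close Scope ring_scope.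
Local Open Scope R_scope.

Theorem mainTheorem9 (alpha : R) (m : nat -> nat) (P : nat -> nat -> R) :
  (1 < alpha < 2)%R ->
  (forall n, (0 < m n)%nat) ->
  (forall n, is_prob_on (m n) (P n)) ->
  (forall K, exists N, forall n, (N <= n)%nat -> (K <= m n)%nat) ->
  condA m P ->
  condPL alpha m P ->
  (exists beta : R, (alpha - 1 < beta)%R /\
     exists (c : R) (N : nat), (0 < c)%R /\
       forall n, (N <= n)%nat -> (c * Rpower (INR n) beta <= INR (m n))%R) ->
  exists delta : R, (0 < delta)%R /\
    Un_cv (fun n => eventProb (P n)
             (fun f : outcome n (m n) =>
                if Rle_dec (INR (omega' f)) (Rpower (INR n) (1 - alpha / 2 - delta))
                then true else false)) 1%R.
Proof.
move=> [ha1 ha2] hm hP _ [C [N1 hC]] _ [beta [hbeta [c [N0 [hc hmb]]]]].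
pose b0 := Rmin beta 1.
have hb0b : b0 <= beta by apply: Rmin_l.
have hb01 : b0 <= 1 by apply: Rmin_r.
have hg : 0 < b0 + 1 - alpha by rewrite /b0; apply: (Rmin_case beta 1 (fun x => 0 < x + 1 - alpha)); slra.
pose g := b0 + 1 - alpha.
exists (g / 4); split; first by rewrite /g; slra.
pose e := 1 - alpha / 2 - g / 4.
have he : 0 < e by rewrite /e /g; slra.
have [j0 hj0] := nat_big (2 / g).
have hj0g : 2 <= INR j0 * g.
  have hg' : 0 < g by [].
  have := Rmult_le_compat_r g _ _ (Rlt_le _ _ hg') hj0.
  by rewrite /Rdiv Rmult_assoc Rinv_l; slra.
pose rho := 1 + (1 - b0) * INR j0 - e * (2 * INR (S j0)).
have hrho : rho < 0.
  have -> : rho = b0 - (INR j0 * g) / 2 - g / 2 by rewrite /rho /e /g S_INR; sfield.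
  have hb : b0 <= 1 by [].
  have hg2 : 0 < g by [].
  clearbody g; slra.
pose K := (C ^ 2) ^ S j0 * 4 ^ S j0 / c ^ j0.
have hK : 0 <= K.
  rewrite /K; apply: Rmult_le_pos; last by apply: Rlt_le; apply: Rinv_0_lt_compat; apply: pow_lt.
  apply: Rmult_le_pos; apply: pow_le; [exact: pow2_ge_0 | slra].
move=> eps heps.
have hepsK : 0 < eps / (K + 1) by apply: Rdiv_lt_0_compat; slra.
have [N2 hN2] := Rpower_small rho (eps / (K + 1)) hrho hepsK.
have [N3 hN3] := Rpower_big e (2 * INR (Nat.mul 2 (S j0))) he.
exists (N0 + N1 + N2 + N3 + 1)%nat => n hn.
have hn' := hn; move/ssrnat.leP: hn' => hn'.
have hn0 : (N0 <= n)%nat by apply/ssrnat.leP; lia.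
have hn1 : (N1 <= n)%nat by apply/ssrnat.leP; lia.
have hn2 : (N2 <= n)%nat by apply/ssrnat.leP; lia.
have hn3 : (N3 <= n)%nat by apply/ssrnat.leP; lia.
have hn4 : (1 <= n)%nat by apply/ssrnat.leP; lia.
have hnR : 1 <= INR n by apply: (le_INR 1); apply/ssrnat.leP.
set T := Rpower (INR n) e.
have hT : 0 < T by apply: Rpower_pos.
have hkT : 2 * INR (Nat.mul 2 (S j0)) <= T by apply: hN3; apply/ssrnat.leP.
have [hlo hhi] := good_prob n (m n) (P n) T (Nat.mul 2 (S j0)) (hm n) (hP n) hT hkT.
have hMpos : 0 < INR (m n) by apply: lt_0_INR; apply/ssrnat.ltP; exact: hm.
have hEX := EXs_ge0 (m n) (P n) (hP n).
have hCn : sqrt (INR n / INR (m n)) * EXs (m n) (P n) <= C by apply: hC.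
have hMb : c * Rpower (INR n) b0 <= INR (m n).
  apply: Rle_trans (hmb n hn0).
  apply: Rmult_le_compat_l; first slra.
  by apply: Rle_Rpower.
have hnpos : 0 < INR n by slra.
have hb := bound_alg (INR n) (INR (m n)) (EXs (m n) (P n)) C c T b0 e j0 hnpos hMpos hEX hCn hc hMb (erefl T).
have hsm := hN2 n ltac:(by apply/ssrnat.leP).
have hRp : 0 < Rpower (INR n) rho by apply: Rpower_pos.
rewrite /R_dist Rabs_left1; last slra.
have : K * Rpower (INR n) rho < eps.
  apply: Rle_lt_trans (_ : K * (eps / (K + 1)) < eps).
    by apply: Rmult_le_compat_l => //; slra.
  apply: (Rmult_lt_reg_r (K + 1)); first slra.
  have -> : K * (eps / (K + 1)) * (K + 1) = K * eps by sfield; slra.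
  snra.
move: hb; rewrite -/rho -/K.
slra.
Qed.
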